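(* Let $N\geq1$, let $\mathbb{A}$ be a real antisymmetric $N\times N$ matrix, let $\gamma_1,\dots,\gamma_N\geq 0$ and $v_1,\dots,v_N\in\{-1,+1\}$, and let $\mathbb{L}=\mathbb{A}+\mathbb{D}$ with $\mathbb{D}=\mathrm{diag}(2\gamma_1v_1,\dots,2\gamma_Nv_N)$. Let $\mathfrak{V}=\{j: v_j=+1\}$ and $L_0=2\sum_{j\in\mathfrak{V}}\gamma_j$. Let $\lambda_1,\dots,\lambda_N$ be the eigenvalues of $\mathbb{L}$ (with multiplicity), ordered so that $\mathrm{Re}\,\lambda_1\geq\mathrm{Re}\,\lambda_2\geq\cdots\geq\mathrm{Re}\,\lambda_N$, and for $0\leq n\leq N$ set $\Delta_n=L_0-\sum_{k=1}^n\mathrm{Re}\,\lambda_k$. Then: (i) if $\mathfrak{V}\neq\emptyset$, $$\max\Big\{0,\;2\Big(\sum_{j\in\mathfrak{V}}\gamma_j-n\max_{j\in\mathfrak{V}}\gamma_j\Big)\Big\}\leq\Delta_n\leq 2\Big(\sum_{j\in\mathfrak{V}}\gamma_j+n\max_{1\le j\le N}\gamma_j\Big);$$ (ii) if $\mathfrak{V}=\emptyset$, $$2n\min_{1\le j\le N}\gamma_j\leq\Delta_n\leq 2n\max_{1\le j\le N}\gamma_j.$$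
   Context: $\mathbb{L}$ is the single-particle matrix of a fermion-number-conserving Lindbladian $\mathcal{L}=\sum_{ij}f_i^\dagger\mathbb{L}_{ij}f_j-L_0$, and $\Delta_n$ is the spectral gap (slowest decay rate) in the sector with $n$ adjoint fermions; $\mathfrak{V}$ is the set of sites with interlayer gauge flips. *)

(* Defs.v *)
From HB Require Import structures.
From mathcomp Require Import all_boot all_order all_algebra.
From mathcomp Require Import complex.
Set Implicit Arguments. Unset Strict Implicit. Unset Printing Implicit Defensive.
Import Order.TTheory GRing.Theory Num.Theory.
Local Open Scope ring_scope.

Definition Lmat (R : rcfType) (N : nat) (A : 'M[R]_N) (gamma v : 'I_N -> R)
  : 'M[R]_N := A + diag_mx (\row_j (2 * gamma j * v j)).

Definition Vset (R : rcfType) (N : nat) (v : 'I_N -> R) : {set 'I_N} :=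
  [set j | v j == 1].

Definition L0 (R : rcfType) (N : nat) (gamma v : 'I_N -> R) : R :=
  2 * \sum_(j in Vset v) gamma j.

Definition eigen_list (R : rcfType) (N : nat) (M : 'M[R]_N)
  (lam : 'I_N -> R[i]) : Prop :=
  char_poly (map_mx (real_complex R) M) = \prod_(k < N) ('X - (lam k)%:P).

Definition Re_sorted (R : rcfType) (N : nat) (lam : 'I_N -> R[i]) : Prop :=
  forall i j : 'I_N, (i <= j)%N -> complex.Re (lam j) <= complex.Re (lam i).

Definition Delta (R : rcfType) (N : nat) (gamma v : 'I_N -> R)
  (lam : 'I_N -> R[i]) (n : nat) : R :=
  L0 gamma v - \sum_(k < N | (k < n)%N) complex.Re (lam k).

(* Main.v *)
Require Import Defs.
From HB Require Import structures.
From mathcomp Require Import all_boot all_order all_algebra.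
From mathcomp Require Import complex.
From mathcomp Require Import ring lra.
From mathcomp Require Import fingroup perm.
Import Order.TTheory GRing.Theory Num.Theory.
Local Open Scope ring_scope.

Section Helpers.
Variable R : rcfType.
Local Open Scope sesquilinear_scope.

Lemma ReD (x y : R[i]) : complex.Re (x + y) = complex.Re x + complex.Re y.
Proof. by case: x => a b; case: y. Qed.

Lemma Re0 : complex.Re (0 : R[i]) = 0.
Proof. by []. Qed.

Lemma Re_sum (I : Type) (r : seq I) (P : pred I) (F : I -> R[i]) :
  complex.Re (\sum_(i <- r | P i) F i) = \sum_(i <- r | P i) complex.Re (F i).
Proof. exact: (big_morph _ ReD Re0). Qed.

Lemma Re_mulRJ (z w : R[i]) (x : R) :
  complex.Re (z * (x%:C)%C * (w^*)%R) =
  x * (complex.Re z * complex.Re w + complex.Im z * complex.Im w).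
Proof. case: z => a b; case: w => c e /=. ring. Qed.

Lemma Re_mulJ (z : R[i]) :
  complex.Re (z * (z^*)%R) = complex.Re z ^+ 2 + complex.Im z ^+ 2.
Proof. case: z => a b /=. ring. Qed.

Lemma Re_Jmul (z : R[i]) :
  complex.Re ((z^*)%R * z) = complex.Re z ^+ 2 + complex.Im z ^+ 2.
Proof. case: z => a b /=. ring. Qed.

Lemma char_poly_conjmx (F : fieldType) n (V f : 'M[F]_n) : V \in unitmx ->
  char_poly (V *m f *m invmx V) = char_poly f.
Proof.
move=> Vu; rewrite /char_poly /char_poly_mx.
set V' := map_mx polyC V; set W' := map_mx polyC (invmx V).
have VW : V' *m W' = 1%:M by rewrite -map_mxM mulmxV // map_mx1.
have -> : 'X%:M - map_mx polyC (V *m f *m invmx V) =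
          V' *m ('X%:M - map_mx polyC f) *m W'.
  rewrite !map_mxM mulmxBr mulmxBl mul_mx_scalar -scalemxAl VW scalemx1.
  by rewrite -!mulmxA.
by rewrite !det_mulmx mulrAC -det_mulmx VW det1 mul1r.
Qed.

Lemma unit_rows N (P : 'M[R[i]]_N) (Pu : P \is unitarymx) (i : 'I_N) :
  \sum_j (complex.Re (P i j) ^+ 2 + complex.Im (P i j) ^+ 2) = 1.
Proof.
have := congr1 (fun M : 'M[R[i]]_N => complex.Re (M i i)) (unitarymxP Pu).
rewrite /= !mxE eqxx /= Re_sum => <-.
by apply: eq_bigr => j _; rewrite !mxE Re_mulJ.
Qed.

Lemma unit_cols N (P : 'M[R[i]]_N) (Pu : P \is unitarymx) (j : 'I_N) :
  \sum_i (complex.Re (P i j) ^+ 2 + complex.Im (P i j) ^+ 2) = 1.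
Proof.
have := congr1 (fun M : 'M[R[i]]_N => complex.Re (M j j)) (mulmx1C (unitarymxP Pu)).
rewrite /= !mxE eqxx /= Re_sum => <-.
by apply: eq_bigr => i _; rewrite !mxE Re_Jmul.
Qed.


Lemma core N (hN : (0 < N)%N) (A : 'M[R]_N) (d : 'I_N -> R) (hA : A^T = - A)
  (lam : 'I_N -> R[i])
  (hlam : eigen_list (A + diag_mx (\row_j d j)) lam) (n : nat) :
  exists w : 'I_N -> R, (forall j, 0 <= w j /\ w j <= 1) /\
    \sum_j w j = \sum_(k < N | (k < n)%N) 1 /\
    \sum_(k < N | (k < n)%N) complex.Re (lam k) = \sum_j d j * w j.
Proof.
set L := A + _ in hlam; set M := map_mx (real_complex R) L in hlam.
have [P Pu Ptrig] := Schur M hN.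
have Pun : P \in unitmx := unitarymx_unit Pu.
set T := conjmx P M in Ptrig.
have Ttrig : is_trig_mx T := Ptrig.
have TE : T = P *m M *m P^t* := conjymx M Pu.
have cpT : char_poly T = char_poly M by rewrite /T conjumx // char_poly_conjmx.
rewrite (char_poly_trig Ttrig) hlam in cpT.
have hperm : perm_eq [tuple lam k | k < N] [tuple T i i | i < N].
  apply: prod_XsubC_eq; rewrite !big_tuple.
  under eq_bigr do rewrite tnth_mktuple.
  by under [RHS]eq_bigr do rewrite tnth_mktuple.
have [s hs] := tuple_permP hperm.
have lamE k : lam k = T (s k) (s k).
  have := congr1 (fun t => tnth t k) (val_inj hs).
  by rewrite /= !tnth_mktuple.
pose c i j := complex.Re (P i j) ^+ 2 + complex.Im (P i j) ^+ 2.
have c_ge0 i j : 0 <= c i j by rewrite /c addr_ge0 // sqr_ge0.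
have ReT i : complex.Re (T i i) = \sum_a d a * c i a.
  pose e a b := complex.Re (P i a) * complex.Re (P i b) + complex.Im (P i a) * complex.Im (P i b).
  have -> : complex.Re (T i i) = \sum_b \sum_a (A a b + d a *+ (a == b)) * e a b.
    rewrite TE mxE Re_sum; apply: eq_bigr => b _.
    rewrite mxE mulr_suml Re_sum; apply: eq_bigr => a _.
    rewrite [M a b]mxE [P^t* b i]mxE [P^T b i]mxE Re_mulRJ.
    by rewrite /L !mxE.
  rewrite (eq_bigr (fun b => \sum_a A a b * e a b + \sum_a (d a *+ (a == b)) * e a b)); last first.
    by move=> b _; rewrite -big_split; apply: eq_bigr => a _; rewrite mulrDl.
  rewrite big_split /=.
  have S0 : \sum_b \sum_a A a b * e a b = 0.
    set S := (X in X = 0).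
    have : S = - S.
      rewrite {2}/S exchange_big /= -sumrN; apply: eq_bigr => b _.
      rewrite -sumrN; apply: eq_bigr => a _.
      have hA' : A b a = - A a b.
        by have := congr1 (fun K : 'M[R]_N => K a b) hA; rewrite !mxE.
      rewrite hA' /e; ring.
    move=> h; lra.
  rewrite S0 add0r; apply: eq_bigr => b _.
  rewrite (bigD1 b) //= eqxx mulr1n big1 ?addr0.
    by rewrite /e /c !expr2.
  by move=> a /negbTE ->; rewrite mulr0n mul0r.
exists (fun j => \sum_(k < N | (k < n)%N) c (s k) j); split; [|split].
- move=> j; split; first by apply: sumr_ge0.
  have e : 1 = \sum_i c i j := esym (unit_cols _ _ Pu j).
  rewrite e [X in _ <= X](reindex_inj (@perm_inj _ s)) /=.
  rewrite [X in _ <= X](bigID (fun k : 'I_N => (k < n)%N)) /= lerDl.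
  by apply: sumr_ge0.
- rewrite exchange_big /=; apply: eq_bigr => k _.
  exact: (unit_rows _ _ Pu).
- rewrite (eq_bigr (fun k => \sum_a d a * c (s k) a)); last first.
    by move=> k _; rewrite lamE ReT.
  rewrite exchange_big /=; apply: eq_bigr => a _.
  by rewrite mulr_sumr.
Qed.
End Helpers.

Lemma sum_ones (R : rcfType) N n : (n <= N)%N ->
  \sum_(k < N | (k < n)%N) (1 : R) = n%:R.
Proof.
move=> hn; rewrite -(big_ord_widen N (fun _ => (1 : R)) hn).
by rewrite sumr_const card_ord.
Qed.

Theorem mainTheorem2 (R : rcfType) (N : nat) (hN : (0 < N)%N)
  (A : 'M[R]_N) (gamma v : 'I_N -> R)
  (hA : A^T = - A)
  (hgamma : forall j, 0 <= gamma j)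
  (hv : forall j, v j = 1 \/ v j = -1)
  (lam : 'I_N -> R[i])
  (hlam : eigen_list (Lmat A gamma v) lam)
  (hsort : Re_sorted lam)
  (n : nat) (hn : (n <= N)%N) :
  (Vset v != set0 ->
     Num.max 0 (2 * (\sum_(j in Vset v) gamma j
                     - n%:R * \big[Num.max/0]_(j in Vset v) gamma j))
       <= Delta gamma v lam n
     /\ Delta gamma v lam n
       <= 2 * (\sum_(j in Vset v) gamma j + n%:R * \big[Num.max/0]_(j < N) gamma j))
  /\
  (Vset v = set0 ->
     2 * n%:R * \big[Num.min/gamma (Ordinal hN)]_(j < N) gamma j <= Delta gamma v lam n
     /\ Delta gamma v lam n <= 2 * n%:R * \big[Num.max/0]_(j < N) gamma j).
Proof.
have [w [hw [hsw hS]]] :=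
  @core R N hN A (fun j => 2 * gamma j * v j) hA lam hlam n.
rewrite sum_ones // in hsw.
have sumw c : \sum_j c * w j = c * n%:R by rewrite -mulr_sumr hsw.
have hVin j : j \in Vset v -> v j = 1 by rewrite inE => /eqP.
have hVout j : j \notin Vset v -> v j = -1.
  by case: (hv j) => // h; rewrite inE h eqxx.
rewrite /Delta /L0 hS.
set S := \sum_j _.
set m := \big[Num.max/0]_(j < N) gamma j.
have hm j : gamma j <= m by apply: le_bigmax.
have m0 : 0 <= m by apply: bigmax_ge_id.
split.
- move=> _.
  set G := \sum_(j in Vset v) gamma j.
  set mV := \big[Num.max/0]_(j in Vset v) gamma j.
  have hmV j : j \in Vset v -> gamma j <= mV by move=> h; apply: le_bigmax_cond.
  have mV0 : 0 <= mV by apply: bigmax_ge_id.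
  have h2G : 2 * G = \sum_j (if j \in Vset v then 2 * gamma j else 0).
    by rewrite /G mulr_sumr big_mkcond.
  have S1 : S <= 2 * G.
    rewrite h2G; apply: ler_sum => j _.
    have [w0 w1] := hw j; have g0 := hgamma j.
    case: ifP => hj.
      rewrite hVin //; nra.
    rewrite hVout ?hj //; nra.
  have S2 : S <= 2 * mV * n%:R.
    rewrite -sumw; apply: ler_sum => j _.
    have [w0 w1] := hw j; have g0 := hgamma j.
    case hj : (j \in Vset v).
      have := hmV j hj; rewrite hVin //; nra.
    rewrite hVout ?hj //; nra.
  have S3 : - (2 * m) * n%:R <= S.
    rewrite -sumw; apply: ler_sum => j _.
    have [w0 w1] := hw j; have g0 := hgamma j; have := hm j.
    case hj : (j \in Vset v).
      rewrite hVin //; nra.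
    rewrite hVout ?hj //; nra.
  split; last by lra.
  rewrite ge_max; apply/andP; split; lra.
- move=> hV0.
  have hout j : v j = -1 by apply: hVout; rewrite hV0 inE.
  rewrite hV0 big_set0 mulr0 sub0r.
  set mu := \big[Num.min/gamma (Ordinal hN)]_(j < N) gamma j.
  have hmu j : mu <= gamma j by apply: bigmin_le.
  have S3 : - (2 * m) * n%:R <= S.
    rewrite -sumw; apply: ler_sum => j _.
    have [w0 w1] := hw j; have := hm j; rewrite hout; nra.
  have S4 : S <= - (2 * mu) * n%:R.
    rewrite -sumw; apply: ler_sum => j _.
    have [w0 w1] := hw j; have := hmu j; rewrite hout; nra.
  split; lra.
Qed.
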